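(* Assume that $\mathbf{w} \in V_u(\omega_i) \times V_{\theta}(\omega_i)$, $\partial_n \mathbf{w} = 0$ on $\partial \omega_i$, and $|||\mathbf{w}|||_{s,\omega_i} < \infty$. For $0\leq t \leq s$, there holds \[ |||\mathbf{w}-\mathcal{I}_{L_i}^{\omega_i} \mathbf{w}|||_{t,\omega_i}^2 \leq \left( \frac{\Lambda_{L_i+1}^{\omega_i}}{H^2} \right)^{t-s} |||\mathbf{w}|||_{s,\omega_i}^2, \] where $\mathcal{I}_{L_i}^{\omega_i}$ is the local interpolation operator defined by \[ \mathcal{I}_{L_i}^{\omega_i} \mathbf{w} = \sum_{l=1}^{L_i} \mathcal{M}^{\omega_i}(\mathbf{w},\psi_l^{\omega_i}) \psi_l^{\omega_i}. \]
   Context: Setting: coupled thermomechanical problem on $\Omega\subset\mathbb{R}^d$ with Lamé coefficients $\lambda,\mu$, thermal conductivity $\kappa$, thermal expansion $\beta$; $V_u$, $V_\theta$ are $H^1$-type spaces for displacement and temperature. $\mathcal{T}^H$ is a coarse mesh of size $H$ with vertices $x_i$ and coarse neighborhoods $\omega_i$ (union of coarse elements containing $x_i$). For $\mathbf{w}=(\mathbf{u},\theta)$, $\mathbf{v}=(\mathbf{v}_u,v_\theta)$ the local bilinear forms are $\mathcal{A}^{\omega_i}(\mathbf{w},\mathbf{v}) = a^{\omega_i}(\mathbf{u},\mathbf{v}_u) - \gamma_1 b^{\omega_i}(\mathbf{v}_u,\theta) + \gamma_2 b^{\omega_i}(\mathbf{u},v_\theta) + d^{\omega_i}(\theta,v_\theta)$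 with $a^{\omega_i}(\mathbf{u},\mathbf{v})=\int_{\omega_i}\boldsymbol\sigma(\mathbf{u}):\boldsymbol\epsilon(\mathbf{v})$, $b^{\omega_i}(\mathbf{v},\theta)=\int_{\omega_i}\beta\theta\nabla\cdot\mathbf{v}$, $d^{\omega_i}(\theta,v)=\int_{\omega_i}\kappa\nabla\theta\cdot\nabla v$, and $\mathcal{M}^{\omega_i}(\mathbf{w},\mathbf{v})=\int_{\omega_i}(\lambda+2\mu)\mathbf{u}\cdot\mathbf{v}_u+\kappa\theta v_\theta$; $\gamma_1,\gamma_2$ are relaxation coefficients. The local coupled eigenproblem is $\mathcal{A}^{\omega_i}(\psi^{\omega_i},\mathbf{v}) = H^{-2}\Lambda^{\omega_i}\mathcal{M}^{\omega_i}(\psi^{\omega_i},\mathbf{v})$ for all $\mathbf{v}$, with eigenvalues assumed real, positive and ordered $\Lambda_1^{\omega_i}\le\Lambda_2^{\omega_i}\le\cdots$, and eigenfunctions $\{\psi_l^{\omega_i}\}$ assumed to form a complete $\mathcal{M}^{\omega_i}$-orthonormal basis of $\widetilde V(\omega_i)=\{\mathbf{v}\in V_u(\omega_i)\times V_\theta(\omega_i):\int_{\omega_i}\mathbf{v}=0\}$. The seminorm is $|||\mathbf{v}|||_{s,\omega_i}^2 = \sum_{l=1}^\infty (\Lambda_l^{\omega_i}/H^2)^s\,\mathcal{M}^{\omega_i}(\mathbf{v},\psi_l^{\omega_i})^2$, so that $|||\mathbf{v}|||_{0,\omega_i}^2=\mathcal{M}^{\omega_i}(\mathbf{v},\mathbf{v})$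 and $|||\mathbf{v}|||_{1,\omega_i}^2=\mathcal{A}^{\omega_i}(\mathbf{v},\mathbf{v})$. *)

(* Defs.v *)
From HB Require Import structures.
From mathcomp Require Import all_boot all_order all_algebra.
From mathcomp Require Import all_classical all_reals all_analysis.
Set Implicit Arguments. Unset Strict Implicit. Unset Printing Implicit Defensive.
Import Order.TTheory GRing.Theory Num.Theory.
Local Open Scope ring_scope.

(* Local interpolation operator I_L w = sum_{l=1}^{L} M(w, psi_l) psi_l
   (eigenfunctions indexed from 1, as in the paper; psi 0 is unused). *)
Definition interp (R : realType) (V : lmodType R) (M : V -> V -> R)
  (psi : nat -> V) (L : nat) (w : V) : V :=
  \sum_(1 <= l < L.+1) M w (psi l) *: psi l.

Definition snorm2 (R : realType) (V : lmodType R) (M : V -> V -> R)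
  (psi : nat -> V) (Lam : nat -> R) (H s : R) (v : V) : \bar R :=
  (\sum_(1 <= l <oo) (((Lam l / H ^+ 2) `^ s) * (M v (psi l)) ^+ 2)%:E)%E.

(* Main.v *)
Require Import Defs.
From HB Require Import structures.
From mathcomp Require Import all_boot all_order all_algebra.
From mathcomp Require Import all_classical all_reals all_analysis.
Import Order.TTheory GRing.Theory Num.Theory.
Local Open Scope ring_scope.

Section Aux.
Context {R : realType} {V : lmodType R}.

Lemma linf0 {f : V -> R} : linear f -> f 0 = 0.
Proof.
move=> hf; have := hf 1 0 0; rewrite scaler0 addr0 /= => h.
move: h; rewrite scale1r -{1}[f 0]addr0 => /addrI h; by rewrite h.
Qed.

Lemma linfD {f : V -> R} : linear f -> forall x y, f (x + y) = f x + f y.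
Proof. by move=> hf x y; have := hf 1 x y; rewrite !scale1r. Qed.

Lemma linfZ {f : V -> R} : linear f -> forall a x, f (a *: x) = a * f x.
Proof. by move=> hf a x; have := hf a x 0; rewrite addr0 (linf0 hf) addr0. Qed.

Lemma linfB {f : V -> R} : linear f -> forall x y, f (x - y) = f x - f y.
Proof.
by move=> hf x y; rewrite linfD // -scaleN1r linfZ // mulN1r.
Qed.

Lemma linfS {f : V -> R} : linear f -> forall m n (F : nat -> V),
  f (\sum_(m <= i < n) F i) = \sum_(m <= i < n) f (F i).
Proof.
move=> hf m n F; apply: (big_ind2 (fun a b => f a = b)).
- exact: linf0.
- by move=> x1 x2 y1 y2 <- <-; rewrite linfD.
- by [].
Qed.

Lemma sum_delta (c : nat -> R) (L l : nat) :
  \sum_(1 <= j < L.+1) c j * (j == l)%:R = if (1 <= l <= L)%N then c l else 0.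
Proof.
elim: L => [|L IH]; first by rewrite big_nil; case: l => [|[|]].
rewrite big_nat_recr //= IH.
have [e|ne] := eqVneq L.+1 l.
  by rewrite -e mulr1 ltnn andbF leqnn add0r.
rewrite mulr0 addr0.
case: (1 <= l)%N => //=.
by rewrite [in RHS]leq_eqVlt eq_sym (negbTE ne) ltnS.
Qed.

End Aux.

Theorem mainTheorem1
  (R : realType) (V : lmodType R)
  (* V = V_u(omega_i) x V_theta(omega_i); Vt = mean-zero subspace tilde V(omega_i) *)
  (Vt : set V)
  (* the bilinear forms A^{omega_i} and M^{omega_i} *)
  (A M : V -> V -> R)
  (* abstract predicate "d_n w = 0 on the boundary of omega_i" *)
  (neumann : V -> Prop)
  (H : R) (Lam : nat -> R) (psi : nat -> V) (L : nat) (w : V) (s t : R) :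
  0 < H ->
  (forall u, linear (M u)) -> (forall v, linear (M ^~ v)) ->
  (forall u v, M u v = M v u) -> (forall v, 0 <= M v v) ->
  (forall u, linear (A u)) -> (forall v, linear (A ^~ v)) ->
  (* eigenpairs: A(psi_l, v) = H^-2 Lambda_l M(psi_l, v), real positive ordered *)
  (forall l, (1 <= l)%N -> forall v, A (psi l) v = H ^- 2 * Lam l * M (psi l) v) ->
  (forall l, (1 <= l)%N -> 0 < Lam l) ->
  (forall l k, (1 <= l)%N -> (l <= k)%N -> Lam l <= Lam k) ->
  (* complete M-orthonormal basis of Vt *)
  (forall l, (1 <= l)%N -> Vt (psi l)) ->
  (forall l k, (1 <= l)%N -> (1 <= k)%N -> M (psi l) (psi k) = (l == k)%:R) ->
  (forall v, Vt v ->
     ((M v v)%:E = \sum_(1 <= l <oo) ((M v (psi l)) ^+ 2)%:E)%E) ->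
  neumann w ->
  (snorm2 M psi Lam H s w < +oo)%E ->
  0 <= t -> t <= s ->
  (snorm2 M psi Lam H t (w - interp M psi L w)
     <= ((Lam L.+1 / H ^+ 2) `^ (t - s))%:E * snorm2 M psi Lam H s w)%E.
Proof.
move=> H0 _ Mlin Msym M0 _ _ _ Lam0 Lammon _ Mon _ _ _ t0 ts.
have Mw' : forall l, (1 <= l)%N ->
    M (w - interp M psi L w) (psi l) = if (l <= L)%N then 0 else M w (psi l).
  move=> l l1.
  move: (linfB (Mlin (psi l))) (linfS (Mlin (psi l))) (linfZ (Mlin (psi l))) => /= hB hS hZ.
  rewrite hB /interp hS.
  under eq_bigr => j _ do rewrite hZ.
  have -> : \sum_(1 <= i < L.+1) M w (psi i) * M (psi i) (psi l) =
            \sum_(1 <= i < L.+1) M w (psi i) * (i == l)%:R.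
    by rewrite !big_nat; apply: eq_bigr => i /andP[i1 _]; rewrite Mon.
  by rewrite sum_delta l1 /=; case: (l <= L)%N; rewrite ?subrr ?subr0.
rewrite /snorm2 -nneseriesZl; last first.
  by move=> i _; rewrite lee_fin mulr_ge0 // ?powR_ge0 // sqr_ge0.
rewrite (eseries_cond _ xpredT) (eseries_cond _ xpredT).
apply: (@lee_nneseries R _ _ (fun i => xpredT i && (1 <= i)%N) 0%N).
  by move=> i _ _; rewrite lee_fin mulr_ge0 // ?powR_ge0 // sqr_ge0.
move=> n /= n1.
rewrite -EFinM lee_fin.
have xpos : forall l, (0 < l)%N -> 0 < Lam l / H ^+ 2.
  by move=> l l1; rewrite divr_gt0 ?Lam0 ?exprn_gt0.
case: (leqP n L) => hn.
  by rewrite Mw' // hn expr0n /= mulr0 mulr_ge0 ?powR_ge0 // mulr_ge0 ?powR_ge0 // sqr_ge0.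
rewrite Mw' // (ifF _ _ (_ : (n <= L)%N = false)); last by rewrite leqNgt hn.
rewrite [in X in _ <= X]mulrA; apply: ler_wpM2r; first exact: sqr_ge0.
have xn := xpos n n1; have xa := xpos L.+1 isT.
have -> : t = (t - s) + s by rewrite subrK.
rewrite powRD; last by rewrite implybE (gt_eqF xn) orbT.
rewrite addrK; apply: ler_wpM2r; first exact: powR_ge0.
have -> : t - s = - (s - t) by rewrite opprB.
rewrite (powRN _ (s - t)) (powRN _ (s - t)) lef_pV2 ?posrE ?powR_gt0 //.
apply: ge0_ler_powR; rewrite ?nnegrE.
- by rewrite subr_ge0.
- exact: ltW.
- exact: ltW.
- apply: ler_wpM2r; first by rewrite invr_ge0 exprn_ge0 // ltW.
  exact: Lammon.
Qed.
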